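(* Consider the multiple-concurrent-proposer auction game described in the context with $m\ge 2$ proposers and $n=1$ honest bidder (so $N=\{0,1\}$), with bidder $i$'s value drawn from a distribution with CDF $F_i$ and density $f_i$. This game has an equilibrium in which the outcome of the auction is the same as in a standard second-price auction (with the same reserve) with no censorship step, and in which the expected tip paid by each bidder to each proposer is $0$. In particular, in this equilibrium: (i) bidder 1 bids truthfully and uses the conditional tip $t_1(v_1)=0$, $T_1(v_1)=1$ for every value $v_1$; (ii) bidder 0, given his value $v_0$ and the observed conditional tip $(t,T)$, offers each proposer the payment $z_0(t,T,v_0)=0$ if $C(v_0)<mT$ and $z_0(t,T,v_0)=T$ if $C(v_0)\ge mT$, in exchange for excluding bidder 1's bid, where $C(v_0)$ is bidder 0's net value to censoring bidder 1's bid, i.e. the difference between his profit $v_0$ from censoring the competing bid and winning the auction for free and his expected surplus from competing with bidder 1 in the auction; (iii) each proposer, given an offered payment $z$ and conditional tip $(t,T)$, excludes (censors) bidder 1's bid with probability $$p(z,t,T)=\begin{cases}0 & z<t,\\ \left(\frac{z-t}{T-t}\right)^{\frac{1}{m-1}} & t\le z<T,\\ 1 & z\ge T.\end{cases}$$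
   Context: Multiple-concurrent-proposer auction game. A seller has one indivisible good; there are $n+1$ buyers $N=\{0,1,\dots,n\}$ with quasilinear utilities and independent private values in $[0,1]$, common knowledge of distributions. The seller announces a sealed-bid second-price auction with reserve $r$ to be conducted within a single slot in which $m$ proposers concurrently and independently each build a block; a bid enters the auction iff at least one proposer includes it. Timing: buyers learn values; buyers $1,\dots,n$ simultaneously submit a private bid $b_i$ and a public conditional (''twin'') tip $(t_i,T_i)$, meaning: if exactly one proposer includes the bid, that proposer receives $T_i$; if more than one proposer includes it, each including proposer receives $t_i$; if none includes it, nothing is paid. Buyer 0 observes all conditional tips and simultaneously offers each proposer a take-it-or-leave-it offer of a subset $S\subseteq\{1,\dots,n\}$ and a payment to exclude those bids (paid to a proposer iff he excludes them), and submits his own bid $b_0$. Each proposer simultaneously accepts or rejects (possibly randomizing), constructing his block to contain $N\setminus S$ or $N$. The second-price auction is computed on the union of included bids (highest included bid wins if at least $r$, paying the maximum of $r$ and other included bids), and tips are paid according to inclusion behavior. Attention is restricted to equilibria (perfect Bayesian) in which bidders $1,\dots,n$ bid truthfully and bidder 0 bids his value if he assigns positive probability to winning. *)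

(* Defs.v *)
From mathcomp Require Import all_boot all_order all_algebra.
From mathcomp Require Import all_classical all_reals all_analysis.
Set Implicit Arguments. Unset Strict Implicit. Unset Printing Implicit Defensive.
Import Order.TTheory GRing.Theory Num.Theory.
Import numFieldNormedType.Exports.
Local Open Scope classical_set_scope.
Local Open Scope ring_scope.

Section Game.
Variable R : realType.

(* A value distribution on [0,1] given by a density f (CDF F(x) = int_0^x f). *)
Definition is_value_density (f : R -> R) : Prop :=
  measurable_fun setT f /\ (forall x, 0 <= f x) /\
  (\int[lebesgue_measure]_(x in `[0%R, 1%R]) (f x)%:E = 1)%E.

Definition Ex (f : R -> R) (g : R -> R) : R :=
  \int[lebesgue_measure]_(x in `[0%R, 1%R]) (g x * f x).

(* Second-price auction with reserve r, ties broken in favour of bidder 0. *)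
Definition u0_alone (r v0 b0 : R) : R := if r <= b0 then v0 - r else 0.
Definition u0_both (r v0 b0 b1 : R) : R :=
  if (b1 <= b0) && (r <= b0) then v0 - Num.max r b1 else 0.
Definition u1_both (r v1 b1 b0 : R) : R :=
  if (b0 < b1) && (r <= b1) then v1 - Num.max r b0 else 0.

Definition pexcl (m : nat) (z t T : R) : R :=
  if z < t then 0
  else if z < T then ((z - t) / (T - t)) `^ ((m.-1)%:R)^-1
  else 1.

(* C(v0): bidder 0's net value to censoring bidder 1's bid: payoff from being
   alone in the auction minus expected surplus competing with bidder 1
   (who bids truthfully; belief about v1 is the prior). *)
Definition censor_value (r : R) (f1 : R -> R) (v0 : R) : R :=
  u0_alone r v0 v0 - Ex f1 (fun v1 => u0_both r v0 v0 v1).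

Definition z0 (m : nat) (r : R) (f1 : R -> R) (t T v0 : R) : R :=
  if censor_value r f1 v0 < m%:R * T then 0 else T.

Definition t1 (v1 : R) : R := 0.
Definition T1 (v1 : R) : R := 1.

(* expected tip received by one proposer from bidder 1 when every proposer
   independently excludes with probability p *)
Definition exp_tip (m : nat) (p t T : R) : R :=
  (1 - p) * (p ^+ m.-1 * T + (1 - p ^+ m.-1) * t).

(* Interim expected utility of bidder 0 (value v0, observed tip (t,T)) who bids
   b0 and offers zs j to proposer j for excluding bidder 1's bid; proposers
   follow (iii), bidder 1 bids truthfully, v1 distributed with density f1. *)
Definition U0 (m : nat) (r : R) (f1 : R -> R) (t T v0 b0 : R)
    (zs : 'I_m -> R) : R :=
  let cens := \prod_(j < m) pexcl m (zs j) t T in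
  cens * u0_alone r v0 b0 + (1 - cens) * Ex f1 (fun v1 => u0_both r v0 b0 v1)
  - \sum_(j < m) zs j * pexcl m (zs j) t T.

Arguments U0 m r f1 t T v0 b0 zs : clear implicits.

(* Interim expected utility of bidder 1 (value v1) bidding b with twin tip
   (t,T); bidder 0 follows (ii) and bids v0, proposers follow (iii). *)
Definition U1 (m : nat) (r : R) (f0 f1 : R -> R) (v1 b t T : R) : R :=
  Ex f0 (fun v0 =>
    let p := pexcl m (z0 m r f1 t T v0) t T in
    (1 - p ^+ m) * u1_both r v1 b v0 - m%:R * exp_tip m p t T).

(* A proposer excluding with probability q, facing offer z and tip (t,T),
   believing each of the other m-1 proposers received the same offer and
   excludes with probability po. *)
Definition proposer_payoff (m : nat) (q z t T po : R) : R :=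
  q * z + (1 - q) * (po ^+ m.-1 * T + (1 - po ^+ m.-1) * t).

Definition profile_is_equilibrium (m : nat) (r : R) (f0 f1 : R -> R) : Prop :=
  (forall v1 : R, 0 <= v1 <= 1 -> forall b t T : R, 0 <= t -> t <= T ->
     U1 m r f0 f1 v1 b t T <= U1 m r f0 f1 v1 v1 (t1 v1) (T1 v1)) /\
  (forall v0 : R, 0 <= v0 <= 1 -> forall t T : R, 0 <= t -> t <= T ->
   forall (b0 : R) (zs : 'I_m -> R), (forall j, 0 <= zs j) ->
     U0 m r f1 t T v0 b0 zs <= U0 m r f1 t T v0 v0 (fun=> z0 m r f1 t T v0)) /\
  (forall t T z : R, 0 <= t -> t <= T -> 0 <= z ->
     0 <= pexcl m z t T <= 1 /\
     forall q : R, 0 <= q <= 1 ->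
       proposer_payoff m q z t T (pexcl m z t T)
       <= proposer_payoff m (pexcl m z t T) z t T (pexcl m z t T)).

End Game.

(* Main.v *)
Require Import Defs.
From mathcomp Require Import all_boot all_order all_algebra.
From mathcomp Require Import all_classical all_reals all_analysis.
From mathcomp Require Import ring lra.
Import Order.TTheory GRing.Theory Num.Theory.
Local Open Scope ring_scope.

Section S.
Variable R : realType.
Local Open Scope ereal_scope.
Lemma le_int_nm (D : set R) (f g : R -> \bar R) :
  (forall x, D x -> 0 <= f x) -> (forall x, D x -> f x <= g x) ->
  \int[@lebesgue_measure R]_(x in D) f x <= \int[lebesgue_measure]_(x in D) g x.
Proof.
move=> f0 fg.
have g0 : forall x, D x -> 0 <= g x by move=> x Dx; exact: le_trans (f0 x Dx) (fg x Dx).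
rewrite [X in X <= _]ge0_integralE// [X in _ <= X]ge0_integralE//.
apply: ereal_sup_le => _ [h hf <-]; exists h => //= x.
apply: le_trans (hf x) _.
rewrite /patch; case: ifP => // /set_mem Dx; exact: fg.
Qed.
Local Close Scope ereal_scope.
Local Open Scope ring_scope.

Lemma Ex_le (f g h : R -> R) : is_value_density f ->
  (forall x, 0 <= x <= 1 -> g x <= h x) ->
  (forall x, 0 <= x <= 1 -> 0 <= h x <= 1) -> Ex f g <= Ex f h.
Proof.
move=> [_ [f0 f1]] gh h01.
have inD : forall x, `[(0:R), 1]%classic x -> 0 <= x <= 1.
  by move=> x; rewrite /= in_itv.
rewrite /Ex /Rintegral.
set b := (\int[_]_(x in _) _)%E.
set a := (\int[_]_(x in _) _)%E.
have Ha0 : (0 <= a)%E.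
  apply: integral_ge0 => x /inD Dx; rewrite lee_fin mulr_ge0 //.
  by case/andP: (h01 x Dx).
have Ha1 : (a <= 1)%E.
  rewrite -f1; apply: le_int_nm => x /inD Dx; rewrite lee_fin ?mulr_ge0 //.
    by case/andP: (h01 x Dx).
  by rewrite ler_piMl //; case/andP: (h01 x Dx).
rewrite /b integralE.
set P := (\int[_]_(x in _) _)%E.
set N := (\int[_]_(x in _) _)%E.
have HP0 : (0 <= P)%E by apply: integral_ge0 => x _; exact: funepos_ge0.
have HN0 : (0 <= N)%E by apply: integral_ge0 => x _; exact: funeneg_ge0.
have HPa : (P <= a)%E.
  apply: le_int_nm => [x _|x /inD Dx]; first exact: funepos_ge0.
  rewrite funeposE ge_max lee_fin; apply/andP; split.
    by rewrite ler_wpM2r // gh.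
  by rewrite lee_fin mulr_ge0 //; case/andP: (h01 x Dx).
move: Ha0 Ha1 HP0 HPa HN0.
case: a => [a| |] //; case: P => [p| |] //; case: N => [n| |] //=.
- rewrite !lee_fin => *; rewrite /= ; lra.
Qed.

Lemma pexcl_props m (z t T : R) : (2 <= m)%N -> 0 <= t -> t <= T -> 0 <= z ->
  let p := pexcl m z t T in
  [/\ 0 <= p <= 1, T * p ^+ m <= z * p &
   forall q, 0 <= q <= 1 -> proposer_payoff m q z t T p <= proposer_payoff m p z t T p].
Proof.
case: m => [|n] //; rewrite ltnS => n1 t0 tT z0 /=.
rewrite /proposer_payoff /=.
have Hz : forall x, x * z + (1 - x) * z = z by move=> x; ring.
have [zt|zt] := ltP z t.
  rewrite /pexcl zt !expr0n /= (gtn_eqF n1) !mul0r ?subr0 ?add0r ?mul1r ?mulr0 ?mul0r.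
  split => //; first by rewrite lexx ler01.
  move=> q /andP[q0 q1].

  have : q * z <= q * t by rewrite ler_wpM2l // ltW.
  lra.
have [zT|zT] := ltP z T.
  have Tt : 0 < T - t by rewrite subr_gt0; exact: le_lt_trans zt zT.
  set a := (z - t) / (T - t).
  have a0 : 0 <= a by rewrite divr_ge0 // ?subr_ge0 // ltW.
  have aE : a * (T - t) = z - t by rewrite divfK // gt_eqF.
  have a1 : a <= 1 by rewrite ler_pdivrMr // mul1r lerD2r ltW.
  rewrite /pexcl ltNge zt /= zT.
  set q := a `^ _.
  have q0 : 0 <= q by exact: powR_ge0.
  have qn : q ^+ n = a.
    rewrite /q -powR_mulrn // -powRrM mulVf ?powRr1 //.
    by rewrite pnatr_eq0 -lt0n.
  have q1 : q <= 1.
    rewrite -(ler_pXn2r (n := n)) ?expr1n ?qn //.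
    by rewrite nnegrE.
  rewrite qn.
  have HK : a * T + (1 - a) * t = z by lra.
  rewrite HK Hz; split.
  - by rewrite q0 q1.
  - rewrite exprSr qn mulrA ler_wpM2r //; nra.
  - by move=> q' _; rewrite Hz.
have tz : t <= z := le_trans tT zT.
rewrite /pexcl ltNge tz /= ltNge zT /= expr1n !mul1r subrr mul0r addr0 mulr1.
split; first by rewrite ler01 lexx.
- by rewrite mulr1.
- move=> q /andP[q0 q1]; rewrite expr1n subrr mul0r addr0 mul1r.
  have : (1 - q) * T <= (1 - q) * z by rewrite ler_wpM2l // subr_ge0.
  lra.
Qed.

Lemma amgm m (q : 'I_m -> R) : (forall j, 0 <= q j) ->
  m%:R * \prod_(j < m) q j <= \sum_(j < m) q j ^+ m.
Proof.
move=> q0.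
case: m q q0 => [|n] q q0; first by rewrite mul0r big_ord0.
have := leif_AGM (I := 'I_n.+1) (A := predT) (E := fun j => q j ^+ n.+1).
rewrite card_ord /=.
have E : forall F : 'I_n.+1 -> R, \prod_(i in predT) F i = \prod_(i < n.+1) F i.
  by move=> F; apply: eq_bigl.
have E2 : forall F : 'I_n.+1 -> R, \sum_(i in predT) F i = \sum_(i < n.+1) F i.
  by move=> F; apply: eq_bigl.
rewrite E E2 prodrXl.
move=> /(_ (fun i _ => exprn_ge0 _ (q0 i))) [H _].
set P := \prod_(j < n.+1) q j.
set S := \sum_(j < n.+1) q j ^+ n.+1.
have P0 : 0 <= P by apply: prodr_ge0 => j _.
have S0 : 0 <= S by apply: sumr_ge0 => j _; exact: exprn_ge0.
have n0 : (0:R) < n.+1%:R by rewrite ltr0n.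
have : P <= S / n.+1%:R.
  by rewrite -(ler_pXn2r (n := n.+1)) // nnegrE // divr_ge0 // ltW.
rewrite ler_pdivlMr // => HP.
by rewrite mulrC.
Qed.

Lemma u1_dom (r v1 b x : R) : 0 <= r -> u1_both r v1 b x <= u1_both r v1 v1 x.
Proof.
move=> r0; rewrite /u1_both.
case: (ltP x b) => /= xb; case: (leP r b) => /= rb;
case: (ltP x v1) => /= xv; case: (leP r v1) => /= rv //;
  rewrite ?subr_ge0 ?subr_le0 ?ge_max ?le_max ?xv ?rv ?(ltW xv) ?(ltW rv) ?orbT //.
Qed.

Lemma u1_bnd (r v1 x : R) : 0 <= r -> v1 <= 1 -> 0 <= u1_both r v1 v1 x <= 1.
Proof.
move=> r0 v11; rewrite /u1_both.
case: (ltP x v1) => /= xv; case: (leP r v1) => /= rv; rewrite ?lexx ?ler01 //.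
rewrite subr_ge0 ge_max rv (ltW xv) /=.
have : r <= Num.max r x by rewrite le_max lexx.
lra.
Qed.

Lemma u0_dom (r v0 b0 v1 : R) : u0_both r v0 b0 v1 <= u0_both r v0 v0 v1.
Proof.
rewrite /u0_both.
case: (leP v1 b0) => /= xb; case: (leP r b0) => /= rb;
case: (leP v1 v0) => /= xv; case: (leP r v0) => /= rv //;
  rewrite ?subr_ge0 ?subr_le0 ?ge_max ?le_max ?xv ?rv ?(ltW xv) ?(ltW rv) ?orbT //.
Qed.

Lemma u0_bnd (r v0 v1 : R) : 0 <= r -> v0 <= 1 -> 0 <= u0_both r v0 v0 v1 <= 1.
Proof.
move=> r0 v01; rewrite /u0_both.
case: (leP v1 v0) => /= xv; case: (leP r v0) => /= rv; rewrite ?lexx ?ler01 //.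
rewrite subr_ge0 ge_max rv xv /=.
have : r <= Num.max r v1 by rewrite le_max lexx.
lra.
Qed.

Lemma u0a_dom (r v0 b0 : R) : u0_alone r v0 b0 <= u0_alone r v0 v0.
Proof.
rewrite /u0_alone; case: (leP r b0) => rb; case: (leP r v0) => rv //.
  by rewrite subr_le0 ltW.
by rewrite subr_ge0.
Qed.

Lemma u0a_le1 (r v0 : R) : 0 <= r -> v0 <= 1 -> u0_alone r v0 v0 <= 1.
Proof. move=> r0 v1; rewrite /u0_alone; case: ifP => _; lra. Qed.

Lemma Ex_ge0 (f g : R -> R) : is_value_density f ->
  (forall x, 0 <= x <= 1 -> 0 <= g x) -> 0 <= Ex f g.
Proof.
move=> [_ [f0 _]] g0; apply: fine_ge0; apply: integral_ge0 => x.
by rewrite /= in_itv => /g0 gx; rewrite lee_fin mulr_ge0.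
Qed.

Lemma censor_lt m r f1 (v0 : R) : (2 <= m)%N -> 0 <= r -> is_value_density f1 ->
  v0 <= 1 -> censor_value r f1 v0 < m%:R.
Proof.
move=> m2 r0 f1d v01; rewrite /censor_value.
have := u0a_le1 r v0 r0 v01.
have : 0 <= Ex f1 (fun v1 => u0_both r v0 v0 v1).
  by apply: Ex_ge0 => // x _; case/andP: (u0_bnd r v0 x r0 v01).
have : (2:R) <= m%:R by rewrite (ler_nat R 2 m).
lra.
Qed.

Lemma pexcl_ge m (z t T : R) : t <= T -> T <= z -> pexcl m z t T = 1.
Proof.
move=> tT Tz; rewrite /pexcl ltNge (le_trans tT Tz) /= ltNge Tz //.
Qed.

Lemma pexcl_0 m (t T : R) : (2 <= m)%N -> 0 <= t -> 0 < T -> pexcl m 0 t T = 0.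
Proof.
move=> m2 t0 T0; rewrite /pexcl T0; case: ltP => // t0'.
have -> : t = 0 by apply/eqP; rewrite eq_le t0 t0'.
rewrite subrr mul0r powR0 // invr_eq0 pnatr_eq0 -lt0n.
by case: m m2 => [|[|n]].
Qed.

Lemma exp_tip_ge0 m (p t T : R) : 0 <= p <= 1 -> 0 <= t -> 0 <= T -> 0 <= exp_tip m p t T.
Proof.
move=> /andP[p0 p1] t0 T0; rewrite /exp_tip.
have a0 : 0 <= p ^+ m.-1 by exact: exprn_ge0.
have a1 : p ^+ m.-1 <= 1 by exact: exprn_ile1.
apply: mulr_ge0; first lra.
apply: addr_ge0; apply: mulr_ge0 => //; lra.
Qed.

End S.

Theorem proposition8 (R : realType) (m : nat) (r : R) (f0 f1 : R -> R) :
  (2 <= m)%N -> 0 <= r ->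
  is_value_density f0 -> is_value_density f1 ->
  profile_is_equilibrium m r f0 f1 /\
  (forall v0 v1 : R, 0 <= v0 <= 1 -> 0 <= v1 <= 1 ->
     let z := z0 m r f1 (t1 v1) (T1 v1) v0 in
     let p := pexcl m z (t1 v1) (T1 v1) in
     (* no censorship: every proposer includes bidder 1's bid, so the auction
        is the standard second-price auction on both truthful bids *)
     p = 0 /\
     (* expected tip to each proposer is 0, from bidder 1 and from bidder 0 *)
     exp_tip m p (t1 v1) (T1 v1) = 0 /\ z * p = 0).
Proof.
move=> m2 r0 f0d f1d.
have m0 : (m == 0)%N = false by move: m2; case: (m).
have m10 : (m.-1 == 0)%N = false by move: m2; case: (m) => [|[|n]].
have z0_01 : forall v0, 0 <= v0 <= 1 -> z0 m r f1 0 1 v0 = 0.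
  by move=> v0 /andP[_ v01]; rewrite /z0 mulr1 censor_lt.
have p01 : pexcl m 0 0 (1:R) = 0 by apply: pexcl_0 => //; exact: ltr01.
have et0 : exp_tip m 0 0 (1:R) = 0.
  by rewrite /exp_tip !mulr0 addr0 mulr1 expr0n m10 mulr0.
have z0_ge0 : forall t T v, 0 <= T -> 0 <= z0 m r f1 t T v.
  by move=> t T v T0; rewrite /z0; case: ifP.
split; last first.
  move=> v0 v1 Hv0 Hv1 z p; rewrite /p /z /t1 /T1 z0_01 // p01 et0 mul0r.
  by [].
split; [|split].
- move=> v1 /andP[v10 v11] b t T t0 tT.
  rewrite /U1 /t1 /T1; apply: Ex_le => // x Hx /=.
    rewrite z0_01 // p01 et0 expr0n m0 subr0 mul1r mulr0 subr0.
    set p := pexcl m _ t T.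
    have [/andP[p0 p1] _ _] := pexcl_props _ _ _ _ _ m2 t0 tT (z0_ge0 t T x (le_trans t0 tT)).
    have e := exp_tip_ge0 _ m p t T.
    have : 0 <= exp_tip m p t T by apply: e; rewrite ?p0 ?p1 // (le_trans t0 tT).
    have := u1_dom _ r v1 b x r0.
    have /andP[ub0 ub1] := u1_bnd _ r v1 x r0 v11.
    have pm0 : 0 <= p ^+ m by exact: exprn_ge0.
    have pm1 : p ^+ m <= 1 by exact: exprn_ile1.
    have mpos : (0:R) <= m%:R by [].
    case: (leP 0 (u1_both r v1 b x)) => ub; nra.
  by rewrite z0_01 // p01 et0 expr0n m0 subr0 mul1r mulr0 subr0 u1_bnd.
- move=> v0 /andP[v00 v01] t T t0 tT b0 zs zs0.
  rewrite /U0 /=.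
  set A := u0_alone r v0 v0.
  set B := Ex f1 (fun v1 => u0_both r v0 v0 v1).
  have Ab : u0_alone r v0 b0 <= A := u0a_dom _ r v0 b0.
  have Bb : Ex f1 (fun v1 => u0_both r v0 b0 v1) <= B.
    by apply: Ex_le => // x _; [exact: u0_dom | exact: u0_bnd].
  set P := \prod_(j < m) pexcl m (zs j) t T.
  set Z := \sum_(j < m) zs j * pexcl m (zs j) t T.
  set S := \sum_(j < m) pexcl m (zs j) t T ^+ m.
  have Hq := fun j => pexcl_props _ _ _ _ _ m2 t0 tT (zs0 j).
  have P0 : 0 <= P by apply: prodr_ge0 => j _; case: (Hq j) => /andP[].
  have P1 : P <= 1 by apply: prodr_ile1 => j _; case: (Hq j).
  have HZ : T * S <= Z.
    by rewrite /S mulr_sumr; apply: ler_sum => j _; case: (Hq j).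
  have HAM : m%:R * P <= S.
    by apply: amgm => j; case: (Hq j) => /andP[].
  have L : P * u0_alone r v0 b0 + (1 - P) * Ex f1 (fun v1 => u0_both r v0 b0 v1) - Z
           <= P * A + (1 - P) * B - Z.
    by rewrite lerD2r; apply: lerD; apply: ler_wpM2l => //; rewrite subr_ge0.
  apply: (le_trans L).
  have T0 : 0 <= T := le_trans t0 tT.
  rewrite prodr_const sumr_const card_ord -mulr_natr /z0 /censor_value -/A -/B.
  case: ifP => HC.
    have [TE|Tpos] := eqVneq T 0.
      have Pe : P = 1.
        by rewrite /P big1 // => j _; apply: pexcl_ge; rewrite ?TE // -TE.
      rewrite (@pexcl_ge _ m 0 t T tT); last by rewrite TE.
      rewrite expr1n !mul0r.
      move: HZ; rewrite Pe TE mul0r; lra.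
    have Tp : 0 < T by rewrite lt_def Tpos T0.
    rewrite pexcl_0 // expr0n m0 mul0r mul0r.
    have h1 : P * (A - B) <= P * (m%:R * T) by rewrite ler_wpM2l // ltW.
    have h2 : T * (m%:R * P) <= T * S by rewrite ler_wpM2l.
    rewrite /= subr0 mul1r mul0r subr0 add0r; nra.
  rewrite pexcl_ge // expr1n mulr1.
  have HC' : m%:R * T <= A - B by rewrite leNgt HC.
  have h1 : (1 - P) * (m%:R * T) <= (1 - P) * (A - B) by rewrite ler_wpM2l // subr_ge0.
  have h2 : T * (m%:R * P) <= T * S by rewrite ler_wpM2l.
  nra.
- move=> t T z t0 tT z0'.
  have [H1 _ H3] := pexcl_props _ _ _ _ _ m2 t0 tT z0'.
  by split.
Qed.
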